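(* In the dynamic stochastic block model with noise-free ULSE-n1 embeddings $\tilde{\mathbf{Y}}^{(t)}$ described in the context, for all $i,j\in[n]$ and $t,u\in[T]$: (i) if $\mathbf{P}^{(t)}_{i:}=\mathbf{P}^{(t)}_{j:}$ then $\tilde{\mathbf{Y}}^{(t)}_{i:}=\tilde{\mathbf{Y}}^{(t)}_{j:}$; (ii) if $\mathbf{P}^{(t)}_{i:}=\mathbf{P}^{(u)}_{i:}$ and $\tilde{\mathbf{D}}^{(t)}=\tilde{\mathbf{D}}^{(u)}$ then $\tilde{\mathbf{Y}}^{(t)}_{i:}=\tilde{\mathbf{Y}}^{(u)}_{i:}$.
   Context: Setting: $n$ nodes with labels $z_i\in[K]$, symmetric $\mathbf{B}^{(1)},\dots,\mathbf{B}^{(T)}\in[0,1]^{K\times K}$ with all entries positive, $\rho\in(0,1]$, and edge probability matrices $P^{(t)}_{ij}=\rho B^{(t)}_{z_iz_j}$; $\mathbf{P}^{(t)}_{i:}$ denotes the $i$-th row. Noise-free degrees $\tilde d^{(t)}_i=\sum_jP^{(t)}_{ij}$, $\tilde{\mathbf{D}}^{(t)}=\mathrm{diag}(\tilde d^{(t)}_1,\dots,\tilde d^{(t)}_n)$. Noise-free ULSE-n1 with $d=K-1$: $\tilde{\mathbf{L}}^{(t)}=\mathbf{I}_n-\tilde{\mathbf{D}}^{(t)-1/2}\mathbf{P}^{(t)}\tilde{\mathbf{D}}^{(t)-1/2}$, $\tilde{\mathbf{L}}=[\tilde{\mathbf{L}}^{(1)}\mid\cdots\mid\tilde{\mathbf{L}}^{(T)}]\in\mathbb{R}^{n\times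 nT}$ with singular values $\tilde\sigma_1\le\cdots\le\tilde\sigma_n$; $\tilde{\mathbf{\Sigma}}=\mathrm{diag}(\tilde\sigma_2,\dots,\tilde\sigma_K)$, assumed invertible; $\tilde{\mathbf{U}}\in\mathbb{R}^{n\times d}$, $\tilde{\mathbf{V}}\in\mathbb{R}^{nT\times d}$ with orthonormal columns satisfying $\tilde{\mathbf{L}}\tilde{\mathbf{V}}=\tilde{\mathbf{U}}\tilde{\mathbf{\Sigma}}$, $\tilde{\mathbf{L}}^\top\tilde{\mathbf{U}}=\tilde{\mathbf{V}}\tilde{\mathbf{\Sigma}}$; $\tilde{\mathbf{V}}^{(t)}$ the $t$-th block of $n$ rows of $\tilde{\mathbf{V}}$; and $\tilde{\mathbf{Y}}^{(t)}=\tilde{\mathbf{V}}^{(t)}\tilde{\mathbf{\Sigma}}^{1/2}-\tilde{\mathbf{U}}\tilde{\mathbf{\Sigma}}^{-1/2}$. *)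

(* Defs.v *)
From HB Require Import structures.
From mathcomp Require Import all_boot all_order all_algebra.
Set Implicit Arguments. Unset Strict Implicit. Unset Printing Implicit Defensive.
Import Order.TTheory GRing.Theory Num.Theory.
Local Open Scope ring_scope.

Section DSBM.
Variables (R : rcfType) (n K T : nat).

(* number of rows of the column-stacked matrix V~ : n*T written as a block sum *)
Definition nT : nat := (\sum_(t < T) n)%N.

Definition Pmx (rho : R) (B : 'I_T -> 'M[R]_K) (z : 'I_n -> 'I_K) (t : 'I_T)
  : 'M[R]_n := \matrix_(i, j) (rho * B t (z i) (z j)).

Definition deg (P : 'M[R]_n) (i : 'I_n) : R := \sum_(j < n) P i j.
Definition Dmx (P : 'M[R]_n) : 'M[R]_n := diag_mx (\row_i deg P i).
Definition Dinvsqrt (P : 'M[R]_n) : 'M[R]_n :=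
  diag_mx (\row_i (Num.sqrt (deg P i))^-1).

Definition Lmx (P : 'M[R]_n) : 'M[R]_n :=
  1%:M - Dinvsqrt P *m P *m Dinvsqrt P.

Definition Ltilde (L : 'I_T -> 'M[R]_n) : 'M[R]_(n, nT) :=
  mxrow (q_ := fun _ : 'I_T => n) L.

Definition Vblock m (V : 'M[R]_(nT, m)) (t : 'I_T) : 'M[R]_(n, m) :=
  submxcol (p_ := fun _ : 'I_T => n) V t.

End DSBM.

(* sigma_0 <= ... <= sigma_{n-1} (0-based) are the singular values of the
   n x m matrix A in nondecreasing order: they are nonnegative, sorted, and
   A A^T = Q^T diag(sigma^2) Q for some orthogonal Q (i.e. sigma_i^2 are the
   eigenvalues of A A^T, with multiplicity). *)
Definition sorted_singular_values (R : rcfType) (n m : nat)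
  (A : 'M[R]_(n, m)) (sigma : 'I_n -> R) : Prop :=
  (forall i, 0 <= sigma i) /\
  (forall i j : 'I_n, (i <= j)%N -> sigma i <= sigma j) /\
  exists Q : 'M[R]_n, Q *m Q^T = 1%:M /\
    A *m A^T = Q^T *m diag_mx (\row_i (sigma i ^+ 2)) *m Q.

(* Sigma~ = diag(sigma_2,...,sigma_K) (1-based), i.e. 0-based indices 1..K-1 *)
(* sigma at a natural index (0 outside [0,n); only used with K <= n) *)
Definition sigma_at (R : rcfType) (n : nat) (sigma : 'I_n -> R) (k : nat) : R :=
  if insub k is Some i then sigma i else 0.
Definition Sigmad (R : rcfType) (n K : nat) (sigma : 'I_n -> R) (f : R -> R)
  : 'M[R]_(K.-1) := diag_mx (\row_(k < K.-1) f (sigma_at sigma k.+1)).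

(* Main.v *)
Require Import Defs.
From HB Require Import structures.
From mathcomp Require Import all_boot all_order all_algebra.
Import Order.TTheory GRing.Theory Num.Theory.
Local Open Scope ring_scope.

Lemma row_diag_mul (R : rcfType) n m (d : 'rV[R]_n) (X : 'M[R]_(n, m)) i :
  row i (diag_mx d *m X) = d 0 i *: row i X.
Proof. by rewrite mul_diag_mx; apply/rowP => k; rewrite !mxE. Qed.

Lemma deg_row (R : rcfType) n (A : 'M[R]_n) i j :
  row i A = row j A -> deg A i = deg A j.
Proof.
move=> h; rewrite /deg; apply: eq_bigr => k _.
by move/rowP: h => /(_ k); rewrite !mxE.
Qed.

Lemma sigma_at_ge0 (R : rcfType) n (sigma : 'I_n -> R) k :
  (forall i, 0 <= sigma i) -> 0 <= sigma_at sigma k.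
Proof. by move=> h; rewrite /sigma_at; case: insub => //. Qed.

Theorem theorem3 (R : rcfType) (n K T : nat) (z : 'I_n -> 'I_K)
  (B : 'I_T -> 'M[R]_K) (rho : R)
  (sigma : 'I_n -> R) (U : 'M[R]_(n, K.-1)) (V : 'M[R]_(nT n T, K.-1)) :
  (forall t, (B t)^T = B t) ->
  (forall t a b, 0 < B t a b <= 1) ->
  0 < rho <= 1 ->
  (K <= n)%N ->
  let P := Pmx rho B z in
  let Lt := Ltilde (fun t => Lmx (P t)) in
  sorted_singular_values Lt sigma ->
  let Sig := Sigmad K sigma id in
  Sig \in unitmx ->
  U^T *m U = 1%:M ->
  V^T *m V = 1%:M ->
  Lt *m V = U *m Sig ->
  Lt^T *m U = V *m Sig ->
  let Y := fun t : 'I_T =>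
    Vblock V t *m Sigmad K sigma Num.sqrt
    - U *m Sigmad K sigma (fun x => (Num.sqrt x)^-1) in
  forall (i j : 'I_n) (t u : 'I_T),
    (row i (P t) = row j (P t) -> row i (Y t) = row j (Y t)) /\
    (row i (P t) = row i (P u) -> Dmx (P t) = Dmx (P u) ->
       row i (Y t) = row i (Y u)).
Proof.
move=> Bsym _ _ _ P Lt [sg0 _] Sig _ _ _ _ HLtU Y i j t u.
set Disq := Sigmad K sigma (fun x => (Num.sqrt x)^-1).
have F1 : Sig *m Disq = Sigmad K sigma Num.sqrt.
  rewrite /Sig /Disq /Sigmad mulmx_diag; congr diag_mx; apply/rowP => k.
  rewrite !mxE /=.
  have h := @sigma_at_ge0 _ _ sigma k.+1 sg0.
  set s := sigma_at sigma k.+1 in h *.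
  rewrite -{1}(sqr_sqrtr h) expr2.
  have [->|nz] := eqVneq (Num.sqrt s) 0; first by rewrite !mul0r.
  by rewrite mulfK.
have Psym : forall t, (P t)^T = P t.
  move=> t0; apply/matrixP => a b; rewrite !mxE.
  by move/matrixP: (Bsym t0) => /(_ (z b) (z a)); rewrite !mxE => ->.
have F2 : forall t0, Vblock V t0 *m Sig = (Lmx (P t0))^T *m U.
  move=> t0; rewrite /Vblock submxcol_mul -HLtU /Lt /Ltilde tr_mxrow mxcol_mul.
  by rewrite mxcolK.
have YE : forall t0, Y t0 = - (Dinvsqrt (P t0) *m
     (P t0 *m (Dinvsqrt (P t0) *m U *m Disq))).
  move=> t0; rewrite /Y -F1 mulmxA F2 /Lmx linearB /= !trmx_mul trmx1 Psym /Dinvsqrt tr_diag_mx.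
  rewrite mulmxBl mul1mx mulmxBl addrAC subrr add0r !mulmxA.
  by [].
split.
  move=> h; rewrite !YE !linearN /=; congr (- _); rewrite /Dinvsqrt !row_diag_mul !mxE (@deg_row _ _ _ _ _ h).
  by rewrite !row_mul h.
move=> h hD.
have hdeg : forall k, deg (P t) k = deg (P u) k.
  by move=> k; move/matrixP: hD => /(_ k k); rewrite /Dmx !mxE eqxx !mulr1n.
have hDi : Dinvsqrt (P t) = Dinvsqrt (P u).
  by rewrite /Dinvsqrt; congr diag_mx; apply/rowP => k; rewrite !mxE hdeg.
by rewrite !YE hDi !linearN /=; congr (- _); rewrite /Dinvsqrt !row_diag_mul !row_mul h.
Qed.
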